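(* Let $X,Y$ be complex Banach spaces, $n\in\mathbb N$, let $F:\mathbb R^n\times X\to Y$ be continuous, let $\mathcal B$ be any family of compact subsets of $X$, and let $\mathrm R$ be the collection of all sequences in $\mathbb R^n$. Then $F$ is Bohr $\mathcal B$-almost periodic if and only if $F$ is $(\mathrm R,\mathcal B)$-multi-almost periodic.
   Context: $B(\mathbf t_0,l)$ is the closed Euclidean ball in $\mathbb R^n$. A continuous $F:\mathbb R^n\times X\to Y$ is Bohr $\mathcal B$-almost periodic if for every $B\in\mathcal B$ and $\epsilon>0$ there exists $l>0$ such that for each $\mathbf t_0\in\mathbb R^n$ there exists $\tau\in B(\mathbf t_0,l)$ with $\|F(\mathbf t+\tau;x)-F(\mathbf t;x)\|_Y\le\epsilon$ for all $\mathbf t\in\mathbb R^n$, $x\in B$. It is $(\mathrm R,\mathcal B)$-multi-almost periodic if for every $B\in\mathcal B$ and every sequence $(\mathbf b_k)\in\mathrm R$ there exist a subsequence $(\mathbf b_{k_l})$ and a function $F^\ast:\mathbb R^n\times X\to Y$ with $\lim_{l\to\infty}F(\mathbf t+\mathbf b_{k_l};x)=F^\ast(\mathbf t;x)$ uniformly for $x\in B$, $\mathbf t\in\mathbb R^n$. *)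

(* Defs.v *)
From HB Require Import structures.
From mathcomp Require Import all_boot all_order all_algebra.
From mathcomp Require Import all_classical all_reals all_analysis.
From mathcomp.real_closed Require Import complex.
Import Order.TTheory GRing.Theory Num.Theory numFieldNormedType.Exports.

Set Implicit Arguments.
Unset Strict Implicit.
Unset Printing Implicit Defensive.

Local Open Scope ring_scope.
Local Open Scope classical_set_scope.

Definition eucl_norm (R : realType) (n : nat) (v : 'rV[R]_n) : R :=
  Num.sqrt (\sum_(i < n) v ord0 i ^+ 2).

Definition bohr_B_almost_periodic (R : realType) (n : nat)
    (X Y : normedModType R[i]) (BB : set (set X))
    (F : 'rV[R]_n -> X -> Y) : Prop :=
  forall B : set X, BB B ->
  forall eps : R, 0 < eps ->
  exists l : R, 0 < l /\
    forall t0 : 'rV[R]_n, exists tau : 'rV[R]_n,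
      eucl_norm (tau - t0) <= l /\
      forall (t : 'rV[R]_n) (x : X), B x ->
        `|F (t + tau) x - F t x| <= (eps%:C)%C.

Definition multi_almost_periodic (R : realType) (n : nat)
    (X Y : normedModType R[i]) (RR : set (nat -> 'rV[R]_n)) (BB : set (set X))
    (F : 'rV[R]_n -> X -> Y) : Prop :=
  forall B : set X, BB B ->
  forall b : nat -> 'rV[R]_n, RR b ->
  exists (phi : nat -> nat) (Fstar : 'rV[R]_n -> X -> Y),
    (forall k, (phi k < phi k.+1)%N) /\
    forall eps : R, 0 < eps ->
    exists N : nat, forall k : nat, (N <= k)%N ->
      forall (t : 'rV[R]_n) (x : X), B x ->
        `|F (t + b (phi k)) x - Fstar t x| <= (eps%:C)%C.

(* Main.v *)
Require Import Defs.
From HB Require Import structures.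
From mathcomp Require Import all_boot all_order all_algebra.
From mathcomp Require Import all_classical all_reals all_analysis.
From mathcomp.real_closed Require Import complex.
From mathcomp Require Import lra.
From Stdlib Require Classical.
Import Order.TTheory GRing.Theory Num.Theory numFieldNormedType.Exports.
Local Open Scope ring_scope.
Local Open Scope classical_set_scope.

Lemma eucl_normN (R : realType) n (v : 'rV[R]_n) : eucl_norm (- v) = eucl_norm v.
Proof. by rewrite /eucl_norm; congr Num.sqrt; apply: eq_bigr => i _; rewrite mxE sqrrN. Qed.

Lemma eucl_norm0 (R : realType) n : eucl_norm (0 : 'rV[R]_n) = 0.
Proof. by rewrite /eucl_norm big1 ?sqrtr0 // => i _; rewrite mxE expr0n. Qed.

Lemma mx_norm_le_eucl (R : realType) n (v : 'rV[R]_n) : `|v| <= eucl_norm v.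
Proof.
rewrite -[leLHS]/(mx_norm v) mx_normrE; apply/bigmax_leP; split.
  by rewrite sqrtr_ge0.
move=> [i j] _ /=; rewrite (ord1 i) /eucl_norm.
rewrite -sqrtr_sqr; apply: ler_wsqrtr.
rewrite (bigD1 j) //= lerDl; apply: sumr_ge0 => k _; exact: sqr_ge0.
Qed.

Lemma compact_normball (R : realType) n (l : R) : 0 < l ->
  compact [set v : 'rV[R]_n | `|v| <= l].
Proof.
move=> l0; apply: bounded_closed_compact.
  rewrite /bounded_near /=; near=> M => v /= hv; apply: (le_trans hv); near: M.
  by apply: nbhs_pinfty_ge; exact: num_real.
suff -> : [set v : 'rV[R]_n | `|v| <= l] = closed_ball 0 l by exact: closed_ball_closed.
rewrite closed_ballE //; apply/seteqP; split => v /=; rewrite /closed_ball_ /= sub0r normrN.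
Unshelve. all: by end_near.
Qed.

Section UC.
Variables (R : realType) (n : nat) (X Y : normedModType R[i]).
Variables (F : 'rV[R]_n -> X -> Y) (B : set X).
Hypothesis Fc : continuous (fun p : 'rV[R]_n * X => F p.1 p.2).
Hypothesis Bc : compact B.
Hypothesis Hb : forall eps : R, 0 < eps ->
  exists l : R, 0 < l /\
    forall t0 : 'rV[R]_n, exists tau : 'rV[R]_n,
      eucl_norm (tau - t0) <= l /\
      forall (t : 'rV[R]_n) (x : X), B x ->
        `|F (t + tau) x - F t x| <= (eps%:C)%C.

Lemma UC (e : R) : 0 < e -> exists2 d : R, 0 < d &
  forall s s' x, B x -> `|s - s'| < d -> `|F s x - F s' x| <= (e%:C)%C.
Proof.
move=> e0.
have e3 : 0 < e / 3 by rewrite divr_gt0.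
have [l [l0 Hl]] := Hb (e / 3) e3.
have cK := compact_setX (@compact_normball R n l l0) Bc.
have H : \forall d \near (0:R)^'+, ([set v : 'rV[R]_n | `|v| <= l] `*` B) `<=`
  (fun q : 'rV[R]_n * X => forall s', `|q.1 - s'| < d ->
     `|F q.1 q.2 - F s' q.2| <= ((e / 3)%:C)%C).
  apply: ((compact_near_coveringP _).1 cK R (0:R)^'+).
  move=> [p y] [Kp By] /=.
  have e6 : 0 < ((e / 6)%:C)%C by rewrite ltcE /= eqxx /= divr_gt0.
  have := Fc (p, y); move/cvgr_dist_lt => /(_ _ e6).
  case => -[A1 A2] /= [nA1 nA2] HA.
  move/nbhs_ballP: nA1 => -[r r0 Hr].
  have r2 : 0 < r / 2 by rewrite divr_gt0.
  exists (ball p (r/2) `*` A2, [set d | d < r/2]).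
    split; last exact: nbhs_right_lt.
    by exists (ball p (r/2), A2) => //=; split => //; exact: nbhsx_ballx.
  move=> [[q1 q2] d] /= [[Hq1 Hq2] Hd] s' Hs'.
  have h1 : `|p - q1| < r / 2 by move: Hq1; rewrite -ball_normE.
  have b1 : A1 q1.
    by apply: Hr; rewrite -ball_normE /=; apply: (lt_trans h1); rewrite ltr_pdivrMr // ltr_pMr // ltr1n.
  have b2 : A1 s'.
    apply: Hr; rewrite -ball_normE /=; apply: (le_lt_trans (ler_distD q1 p s')).
    have -> : r = r / 2 + r / 2 by rewrite -splitr.
    by apply: ltrD => //; apply: (lt_trans Hs').
  have := HA (q1, q2) (conj b1 Hq2); have := HA (s', q2) (conj b2 Hq2) => /= g2 g1.
  apply: (le_trans (ler_distD (F p y) _ _)); rewrite distrC.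
  have -> : e / 3 = e / 6 + e / 6 by lra.
  by rewrite rmorphD /=; apply: lerD; apply: ltW.
have [d [d0 Hd]] := filter_ex (filterI (nbhs_right_gt 0) H).
exists d => // s s' x Bx hss'.
have [tau [Htau Hper]] := Hl (- s).
rewrite opprK in Htau.
have Kw : `|s + tau| <= l.
  by rewrite addrC in Htau; exact: (le_trans (@mx_norm_le_eucl _ _ (s + tau)) Htau).
have := Hd (s + tau, x) (conj Kw Bx) (s' + tau) => /=.
rewrite opprD addrACA subrr addr0 => /(_ hss') hm.
apply: (le_trans (ler_distD (F (s + tau) x) _ _)).
apply: (le_trans (lerD (lexx _) (ler_distD (F (s' + tau) x) _ _))).
have -> : e = e / 3 + e / 3 + e / 3 by lra.
rewrite !rmorphD /= -addrA; apply: lerD; first by rewrite distrC; exact: Hper.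
by apply: lerD => //; exact: Hper.
Qed.

Lemma REF (e : R) : 0 < e -> forall c : nat -> 'rV[R]_n,
  exists (theta : nat -> nat), (forall k, (theta k < theta k.+1)%N) /\
   forall i j t x, B x ->
     `|F (t + c (theta i)) x - F (t + c (theta j)) x| <= (e%:C)%C.
Proof.
move=> e0 c.
have e3 : 0 < e / 3 by rewrite divr_gt0.
have [l [l0 Hl]] := Hb (e / 3) e3.
have [d d0 Hd] := UC (e / 3) e3.
have [tau Htau] := choice (fun k => Hl (c k)).
pose a k := c k - tau k.
have Ka : forall k, [set v : 'rV[R]_n | `|v| <= l] (a k).
  move=> k /=; apply: (le_trans (@mx_norm_le_eucl _ _ (a k))).
  by rewrite /a -opprB eucl_normN; exact: (Htau k).1.
have Fa : (a @ \oo) [set v : 'rV[R]_n | `|v| <= l] by exists 0%N => // k _; exact: Ka.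
have [p [_ Hp]] := (@compact_normball R n l l0) (a @ \oo) _ Fa.
have d2 : 0 < d / 2 by rewrite divr_gt0.
have Hinf : forall N, exists k, (N <= k)%N /\ ball p (d / 2) (a k).
  move=> N.
  have H1 : (a @ \oo) (a @` [set k | (N <= k)%N]) by exists N => // k /= Nk; exists k.
  have H2 : nbhs p (ball p (d / 2)) by exact: nbhsx_ballx.
  have := Hp _ _ H1 H2.
  by case=> _ [[k Nk <-] hb]; exists k.
have [g Hg] := choice Hinf.
pose theta := fix th k := match k with 0 => g 0%N | k'.+1 => g (th k').+1 end.
exists theta; split.
  by move=> k /=; exact: (Hg _).1.
have Hth : forall k, `|p - a (theta k)| < d / 2.
  move=> k; have : ball p (d / 2) (a (theta k)) by case: k => [|k]; exact: (Hg _).2.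
  by rewrite -ball_normE.
move=> i j t x Bx.
have E : forall k, t + c k = (t + a k) + tau k by move=> k; rewrite /a -addrA subrK.
rewrite !E.
apply: (le_trans (ler_distD (F (t + a (theta i)) x) _ _)).
apply: (le_trans (lerD (lexx _) (ler_distD (F (t + a (theta j)) x) _ _))).
have -> : e = e / 3 + (e / 3 + e / 3) by lra.
rewrite !rmorphD /=; apply: lerD; first exact: (Htau (theta i)).2 _ _ Bx.
apply: lerD; last by rewrite distrC; exact: (Htau (theta j)).2 _ _ Bx.
apply: Hd => //; rewrite opprD addrACA subrr add0r.
apply: (le_lt_trans (ler_distD p _ _)); rewrite distrC.
by rewrite [d](splitr d); apply: ltrD.
Qed.
End UC.

Lemma lecC (R : realType) (a b : R) : ((a%:C)%C <= (b%:C)%C) = (a <= b).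
Proof. by rewrite lecE /= eqxx. Qed.

Lemma ltcC (R : realType) (a b : R) : ((a%:C)%C < (b%:C)%C) = (a < b).
Proof. by rewrite ltcE /= eqxx. Qed.

Lemma Cpos (R : realType) (e : R[i]) : 0 < e -> exists2 a : R, 0 < a & e = (a%:C)%C.
Proof. by case: e => a b; rewrite ltcE /= => /andP[/eqP -> a0]; exists a. Qed.

Lemma incr_homo (f : nat -> nat) : (forall k, (f k < f k.+1)%N) ->
  forall i j, (i < j)%N -> (f i < f j)%N.
Proof.
move=> hf i j; exact: (@homo_ltn nat f (fun a b => (a < b)%N)
  (fun y x z h1 h2 => ltn_trans h1 h2) hf).
Qed.

Lemma incr_ge (f : nat -> nat) : (forall k, (f k < f k.+1)%N) -> forall k, (k <= f k)%N.
Proof. by move=> hf; elim => [|k IH] //; apply: leq_ltn_trans IH (hf k). Qed.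

Lemma bohr_multi (R : realType) (n : nat) (X Y : completeNormedModType R[i])
    (F : 'rV[R]_n -> X -> Y) (BB : set (set X)) :
  continuous (fun p : 'rV[R]_n * X => F p.1 p.2) ->
  (forall B : set X, BB B -> compact B) ->
  bohr_B_almost_periodic BB F ->
  multi_almost_periodic [set: nat -> 'rV[R]_n] BB F.
Proof.
move=> Fc Bcpt Hb B HB b _.
have ref := @REF R n X Y F B Fc (Bcpt B HB) (Hb B HB).
pose em (m : nat) : R := (m.+1%:R)^-1.
have em0 : forall m, 0 < em m by move=> m; rewrite invr_gt0.
have H : forall m (c : nat -> 'rV[R]_n), exists th : nat -> nat,
    (forall k, (th k < th k.+1)%N) /\ forall i j t x, B x ->
     `|F (t + c (th i)) x - F (t + c (th j)) x| <= ((em m)%:C)%C.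
  by move=> m c; exact: ref (em m) (em0 m) c.
have H' : forall m, exists f : (nat -> 'rV[R]_n) -> nat -> nat, forall c,
    (forall k, (f c k < f c k.+1)%N) /\ forall i j t x, B x ->
     `|F (t + c (f c i)) x - F (t + c (f c j)) x| <= ((em m)%:C)%C.
  by move=> m; have [f hf] := choice (H m); exists f.
have [rf Hrf] := choice H'.
pose Psi := fix Psi m := match m with 0 => rf 0%N b
  | m'.+1 => fun k => Psi m' (rf m'.+1 (fun k => b (Psi m' k)) k) end.
have Pinc : forall m k, (Psi m k < Psi m k.+1)%N.
  elim => [|m IH] k /=; first exact: (Hrf _ _).1.
  by apply: incr_homo => //; exact: (Hrf _ _).1.
have Ppair : forall m i j t x, B x ->
    `|F (t + b (Psi m i)) x - F (t + b (Psi m j)) x| <= ((em m)%:C)%C.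
  case => [|m] i j t x Bx; first exact: ((Hrf 0%N b).2 i j t x Bx).
  exact: ((Hrf m.+1 (fun k => b (Psi m k))).2 i j t x Bx).
have Pnest : forall m d i, exists j, Psi (m + d)%N i = Psi m j.
  move=> m; elim => [|d IH] i; first by exists i; rewrite addn0.
  by rewrite addnS /=; exact: IH.
pose phi k := Psi k k.
have Key : forall m k k', (m <= k)%N -> (m <= k')%N -> forall t x, B x ->
    `|F (t + b (phi k)) x - F (t + b (phi k')) x| <= ((em m)%:C)%C.
  move=> m k k' mk mk' t x Bx.
  have [j Hj] := Pnest m (k - m)%N k; have [j' Hj'] := Pnest m (k' - m)%N k'.
  rewrite subnKC // in Hj; rewrite subnKC // in Hj'.
  by rewrite /phi Hj Hj'; exact: Ppair.
have small : forall r : R, 0 < r -> exists m, em m < r.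
  move=> r r0; have [N _ /(_ N)/(_ (leqnn _)) HN] := near_infty_natSinv_lt (PosNum r0).
  by exists N.
pose Fs t x := lim ((fun k => F (t + b (phi k)) x) @ \oo).
exists phi, Fs; split.
  move=> k; rewrite /phi /=; apply: incr_homo; first exact: Pinc.
  exact: (@incr_ge _ (Hrf k.+1 (fun j => b (Psi k j))).1 k.+1).
move=> eps eps0.
have eps2 : 0 < eps / 2 by rewrite divr_gt0.
have [m Hm] := small _ eps2.
exists m => k mk t x Bx.
set u := fun k => F (t + b (phi k)) x.
have Hcauchy : cauchy (u @ \oo).
  apply/cauchyP => e /Cpos [a a0 ->].
  have [m' Hm'] := small _ a0.
  exists (u m'); exists m' => // k' /= hk'.
  rewrite -ball_normE /=; apply: (le_lt_trans (Key m' m' k' (leqnn _) hk' t x Bx)).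
  by rewrite ltcC.
have Hcv : u @ \oo --> lim (u @ \oo) by apply/cauchy_cvgP.
have e2C : 0 < (((eps / 2)%:C)%C : R[i]) by rewrite ltcC.
have := Hcv; move/cvgr_dist_lt => /(_ _ e2C) Hnear.
have [k' [mk' Hk']] := filter_ex (filterI (nbhs_infty_ge m) Hnear).
apply: (le_trans (ler_distD (u k') _ _)).
rewrite [eps in (eps%:C)%C](splitr eps) rmorphD /=.
apply: lerD; last by rewrite distrC; exact: ltW.
apply: (le_trans (Key m k k' mk mk' t x Bx)).
by rewrite lecC; exact: ltW.
Qed.

Lemma multi_bohr (R : realType) (n : nat) (X Y : normedModType R[i])
    (F : 'rV[R]_n -> X -> Y) (BB : set (set X)) :
  multi_almost_periodic [set: nat -> 'rV[R]_n] BB F -> bohr_B_almost_periodic BB F.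
Proof.
move=> Hm B HB eps eps0.
apply: Classical_Prop.NNPP => Hno.
have H : forall l : R, exists t0 : 'rV[R]_n, 0 < l -> forall tau,
    eucl_norm (tau - t0) <= l -> exists t x, B x /\
      ~ (`|F (t + tau) x - F t x| <= (eps%:C)%C).
  move=> l; apply: Classical_Prop.NNPP => Hl; apply: Hno; exists l; split.
    apply: Classical_Prop.NNPP => hl; apply: Hl; exists 0 => /hl [].
  move=> t0; apply: Classical_Prop.NNPP => Ht0; apply: Hl; exists t0 => _ tau Htau.
  apply: Classical_Prop.NNPP => Hex; apply: Ht0; exists tau; split => // t x Bx.
  by apply: Classical_Prop.NNPP => Hc; apply: Hex; exists t, x.
have [g Hg] := choice H.
pose s := fix s k := match k with 0 => ((0 : 'rV[R]_n), (0 : R))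
  | k'.+1 => ((g ((s k').2 + 1)), Num.max (s k').2 (eucl_norm (g ((s k').2 + 1)))) end.
have hM0 : forall k, 0 <= (s k).2.
  by elim => [|k IH] //=; rewrite le_max IH.
have hMmono : forall i d, (s i).2 <= (s (i + d)%N).2.
  move=> i; elim => [|d IH]; first by rewrite addn0.
  by rewrite addnS /=; apply: (le_trans IH); rewrite le_max lexx.
have hb : forall k, eucl_norm (s k).1 <= (s k).2.
  by case => [|k] /=; [rewrite eucl_norm0 | rewrite le_max lexx orbT].
have NP : forall i j, (i < j)%N -> ~ (forall t x, B x ->
    `|F (t + ((s j).1 - (s i).1)) x - F t x| <= (eps%:C)%C).
  move=> i [//|j] ij Hp.
  have Hl : 0 < (s j).2 + 1 by rewrite ltr_wpDl.
  have Hn : eucl_norm (((s j.+1).1 - (s i).1) - g ((s j).2 + 1)) <= (s j).2 + 1.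
    rewrite /= addrAC subrr add0r eucl_normN.
    apply: (le_trans (hb i)); apply: (@le_trans _ _ (s j).2); last by rewrite lerDl.
    by have := hMmono i (j - i)%N; rewrite subnKC // -ltnS.
  have [t [x [Bx Hc]]] := Hg _ Hl _ Hn.
  by apply: Hc; apply: Hp.
have [phi [Fs [Hphi Hconv]]] := Hm B HB (fun k => (s k).1) I.
have [N HN] := Hconv (eps / 2) (divr_gt0 eps0 (ltr0Sn _ 1)).
apply: (NP (phi N) (phi N.+1) (Hphi N)) => t x Bx.
set u := t - (s (phi N)).1.
have e1 := HN N.+1 (leqnSn N) u x Bx.
have e2 := HN N (leqnn N) u x Bx.
have -> : t + ((s (phi N.+1)).1 - (s (phi N)).1) = u + (s (phi N.+1)).1.
  by rewrite /u addrAC addrA.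
have -> : F t x = F (u + (s (phi N)).1) x by rewrite /u subrK.
apply: (le_trans (ler_distD (Fs u x) _ _)).
rewrite [eps in (eps%:C)%C](splitr eps) rmorphD /=.
by apply: lerD => //; rewrite distrC.
Qed.


Theorem theorem2p17 (R : realType) (n : nat)
    (X Y : completeNormedModType R[i])
    (F : 'rV[R]_n -> X -> Y) (BB : set (set X)) :
  continuous (fun p : 'rV[R]_n * X => F p.1 p.2) ->
  (forall B : set X, BB B -> compact B) ->
  (bohr_B_almost_periodic BB F <->
   multi_almost_periodic [set: nat -> 'rV[R]_n] BB F).
Proof.
move=> Fc Bc; split; first exact: bohr_multi.
exact: multi_bohr.
Qed.
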